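(* Let $s \geq 0$ be an integer and let $G$ be a bipartite graph with bipartition $A\cup B$, where $A=\{a_1,\dots, a_n\}$ and $B=\{b_1,\dots,b_n\}$, such that: (P1) for all $i,j\in \{1,\dots,n\}$ with $i<j$, $|N_G(a_i)\cap \{b_{i+1},\dots, b_{j}\}| \geq \frac{j-i-s}{2}$; (P2) for all $i,j\in \{1,\dots,n\}$ with $i<j$, $|N_G(b_j)\cap \{a_{i},\dots, a_{j-1}\}| \geq \frac{j-i-s}{2}$. Then $G$ contains a matching of size at least $n-s-1$.
   Context: $N_G(x)$ denotes the set of neighbours of $x$ in the (undirected) graph $G$. *)

(* Defs.v *)
From mathcomp Require Import all_boot.
Set Implicit Arguments. Unset Strict Implicit. Unset Printing Implicit Defensive.

(* A bipartite graph with parts A = {a_0,...,a_(n-1)} and B = {b_0,...,b_(n-1)}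
   (0-based indexing of the paper's a_1..a_n, b_1..b_n) is given by its
   biadjacency relation  adj i j  <=>  a_i b_j is an edge. *)

Definition nbA n (adj : 'I_n -> 'I_n -> bool) (i j : 'I_n) : nat :=
  #|[set k : 'I_n | [&& i < k, k <= j & adj i k]]|.

Definition nbB n (adj : 'I_n -> 'I_n -> bool) (i j : 'I_n) : nat :=
  #|[set k : 'I_n | [&& i <= k, k < j & adj k j]]|.

Definition is_matching n (adj : 'I_n -> 'I_n -> bool) (M : {set 'I_n * 'I_n}) : Prop :=
  (forall e, e \in M -> adj e.1 e.2) /\
  (forall e f, e \in M -> f \in M -> (e.1 = f.1 \/ e.2 = f.2) -> e = f).

(* Main.v *)
Require Import Defs.
From mathcomp Require Import all_boot.
From mathcomp Require Import zify.
Set Implicit Arguments. Unset Strict Implicit. Unset Printing Implicit Defensive.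

Section Hall.
Variables (T1 T2 : finType) (d : nat).

Definition NB (adj : T1 -> T2 -> bool) (X : {set T1}) : {set T2} :=
  [set b | [exists a in X, adj a b]].
Definition E (adj : T1 -> T2 -> bool) : {set T1 * T2} := [set e | adj e.1 e.2].
Definition hallc adj := forall X : {set T1}, #|X| <= #|NB adj X| + d.
Definition matchc adj (M : {set T1 * T2}) :=
  (forall e, e \in M -> adj e.1 e.2) /\
  (forall e f, e \in M -> f \in M -> (e.1 = f.1 \/ e.2 = f.2) -> e = f).

Lemma no_case (adj : T1 -> T2 -> bool) : hallc adj ->
  (forall a b1 b2, adj a b1 -> adj a b2 -> b1 = b2) ->
  exists M, matchc adj M /\ #|T1| <= #|M| + d.
Proof.
move=> H Huniq.
exists [set e : T1 * T2 | adj e.1 e.2 && ([pick x | adj x e.2] == Some e.1)].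
split; first split.
- by move=> e; rewrite inE => /andP[].
- move=> [a1 b1] [a2 b2]; rewrite !inE /= => /andP[h1 /eqP p1] /andP[h2 /eqP p2] [E1|E2].
  + by subst; rewrite (Huniq _ _ _ h1 h2).
  + by subst; move: p1; rewrite p2 => -[->].
- have := H setT; set M := [set e | _]; rewrite cardsT => Ht.
  suff: #|NB adj setT| <= #|M| by move=> h; apply: leq_trans Ht _; rewrite leq_add2r.
  apply: leq_trans (leq_imset_card snd M).
  apply: subset_leq_card; apply/subsetP => b; rewrite inE => /existsP[a /andP[_ hab]].
  case E: [pick y | adj y b] => [x|]; last first.
    by move: E; case: (pickP (fun y => adj y b)) => // /(_ a); rewrite hab.
  have hx: adj x b.
    move: E; case: (pickP (fun y => adj y b)) => [y hy|_] [] // E1.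
    by rewrite -E1.
  apply/imsetP; exists (x,b); last by [].
  by rewrite /M inE /= hx E /=.
Qed.

Definition rm (adj : T1 -> T2 -> bool) (a : T1) (b : T2) := fun x y => adj x y && ((x, y) != (a, b)).

Lemma rm_card (adj : T1 -> T2 -> bool) a b : adj a b -> #|E (rm adj a b)| < #|E adj|.
Proof.
move=> hab.
have -> : E (rm adj a b) = E adj :\ (a, b).
  by apply/setP => -[x y]; rewrite !inE /rm /= andbC.
by rewrite [X in _ < X](cardsD1 (a, b)) inE hab.
Qed.

Lemma rm_sub (adj : T1 -> T2 -> bool) a b x y : rm adj a b x y -> adj x y.
Proof. by case/andP. Qed.

Lemma rm_keyX adj a b1 X : hallc adj -> #|NB (rm adj a b1) X| + d < #|X| -> a \in X.
Proof.
move=> H hX; apply/negPn/negP => aX.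
have : #|NB adj X| <= #|NB (rm adj a b1) X|.
  apply: subset_leq_card; apply/subsetP => b; rewrite !inE => /existsP[x /andP[xX hxb]].
  apply/existsP; exists x; rewrite xX /rm hxb /= xpair_eqE.
  by apply/negP => /andP[/eqP xa _]; move: aX; rewrite -xa xX.
move: (H X); lia.
Qed.

Lemma rm_or (adj : T1 -> T2 -> bool) a b1 b2 : b1 != b2 -> hallc adj ->
  hallc (rm adj a b1) \/ hallc (rm adj a b2).
Proof.
move=> nb H.
case: (boolP [forall X : {set T1}, #|X| <= #|NB (rm adj a b1) X| + d]) => [/forallP h|]; first by left.
case: (boolP [forall X : {set T1}, #|X| <= #|NB (rm adj a b2) X| + d]) => [/forallP h|]; first by right.
rewrite !negb_forall => /existsP[X2 hX2] /existsP[X1 hX1].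
exfalso; rewrite -ltnNge in hX1; rewrite -ltnNge in hX2.
have aX1 := rm_keyX H hX1; have aX2 := rm_keyX H hX2.
set P := X1 :\ a; set Q := X2 :\ a.
have cX1 : #|X1| = (#|P|).+1 by rewrite (cardsD1 a X1) aX1.
have cX2 : #|X2| = (#|Q|).+1 by rewrite (cardsD1 a X2) aX2.
have cU : #|a |: (P :|: Q)| = (#|P :|: Q|).+1 by rewrite cardsU1 !inE eqxx.
have cPQ := cardsUI P Q.
have cN := cardsUI (NB (rm adj a b1) X1) (NB (rm adj a b2) X2).
have s1 : NB adj (a |: (P :|: Q)) \subset (NB (rm adj a b1) X1) :|: (NB (rm adj a b2) X2).
  apply/subsetP => b; rewrite !inE => /existsP[x /andP[xU hxb]].
  move: xU; rewrite !inE => /orP[/eqP xa|/orP[/andP[xa xX]|/andP[xa xX]]].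
  - subst x; case: (eqVneq b b1) => [bb|bb].
    + subst b; apply/orP; right; apply/existsP; exists a.
      by rewrite aX2 /rm hxb /= xpair_eqE eqxx /=.
    + apply/orP; left; apply/existsP; exists a.
      by rewrite aX1 /rm hxb /= xpair_eqE eqxx /=.
  - apply/orP; left; apply/existsP; exists x.
    by rewrite xX /rm hxb /= xpair_eqE (negbTE xa).
  - apply/orP; right; apply/existsP; exists x.
    by rewrite xX /rm hxb /= xpair_eqE (negbTE xa).
have s2 : NB adj (P :&: Q) \subset (NB (rm adj a b1) X1) :&: (NB (rm adj a b2) X2).
  apply/subsetP => b; rewrite !inE => /existsP[x /andP[xU hxb]].
  move: xU; rewrite !inE => /andP[/andP[xa xX1] /andP[_ xX2]].
  apply/andP; split; apply/existsP; exists x.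
    by rewrite xX1 /rm hxb /= xpair_eqE (negbTE xa).
  by rewrite xX2 /rm hxb /= xpair_eqE (negbTE xa).
have h1 := subset_leq_card s1; have h2 := subset_leq_card s2.
have H1 := H (a |: (P :|: Q)); have H2 := H (P :&: Q).
rewrite cX1 in hX1. rewrite cX2 in hX2. rewrite cU in H1.
lia.
Qed.


Lemma lift_match (adj : T1 -> T2 -> bool) a b M : matchc (rm adj a b) M -> matchc adj M.
Proof. by case=> h1 h2; split=> // e /h1 /rm_sub. Qed.

Lemma hall_def (adj : T1 -> T2 -> bool) : hallc adj ->
  exists M, matchc adj M /\ #|T1| <= #|M| + d.
Proof.
move: {2}#|E adj| (leqnn #|E adj|) => m; elim: m adj => [|m IH] adj Hm H;
 (case: (boolP [exists a, exists b1, exists b2, [&& b1 != b2, adj a b1 & adj a b2]]);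
  last first; [move=> hno; apply: no_case => // a b1 b2 h1 h2; apply/eqP/negPn/negP => nb;
   move/negP: hno; apply; apply/existsP; exists a; apply/existsP; exists b1;
   apply/existsP; exists b2; by rewrite nb h1 h2 |
   move=> /existsP[a /existsP[b1 /existsP[b2 /and3P[nb h1 h2]]]]]).
- by have := leq_trans (rm_card h1) Hm; rewrite ltn0.
- case: (rm_or a nb H) => H'.
  + have [M [hM c]] := IH _ (leq_trans (rm_card h1) Hm) H'.
    by exists M; split => //; apply: lift_match hM.
  + have [M [hM c]] := IH _ (leq_trans (rm_card h2) Hm) H'.
    by exists M; split => //; apply: lift_match hM.
Qed.

End Hall.


Lemma key (s n : nat) (adj : 'I_n -> 'I_n -> bool) :
  (forall i j : 'I_n, i < j -> j - i <= 2 * nbA adj i j + s) ->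
  (forall i j : 'I_n, i < j -> j - i <= 2 * nbB adj i j + s) ->
  forall X Y : {set 'I_n}, (forall x y, x \in X -> y \in Y -> ~~ adj x y) ->
  #|X| + #|Y| <= n + s + 1.
Proof.
move=> HA HB X Y noe.
have e1 := cardsUI X Y.
have e2 := cardsC (X :|: Y); rewrite card_ord in e2.
suff: #|X :&: Y| <= #|~: (X :|: Y)| + s + 1 by lia.
case: (leqP #|X :&: Y| 1) => hD; first lia.
have [i0 i0D] : exists i0, i0 \in X :&: Y.
  by apply/set0Pn; rewrite -card_gt0; apply: leq_trans hD.
case: (arg_minnP (fun k : 'I_n => val k) i0D) => i iD imin.
case: (arg_maxnP (fun k : 'I_n => val k) i0D) => j jD jmax.
have iD2 : i \in X :&: Y := iD. have jD2 : j \in X :&: Y := jD.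
have iX : i \in X by move: iD2; rewrite inE => /andP[].
have jY : j \in Y by move: jD2; rewrite inE => /andP[].
have ij : i < j.
  rewrite ltnNge; apply/negP => ji.
  have : X :&: Y \subset [set i].
    apply/subsetP => k kD. rewrite inE; apply/eqP/val_inj/eqP.
    by rewrite eqn_leq (imin _ kD) (leq_trans (jmax _ kD) ji).
  by move/subset_leq_card; rewrite cards1 leqNgt hD.
pose I := [set k : 'I_n | i <= k <= j].
have hI : #|I| <= (j - i).+1.
  pose f := fun k : 'I_n => (inord (k - i) : 'I_(j - i).+1).
  have finj : {in I &, injective f}.
    move=> k1 k2; rewrite !inE => /andP[a1 b1] /andP[a2 b2] h.
    have := congr1 (@nat_of_ord _) h; rewrite /f !inordK; try lia.
    by move=> e; apply: ord_inj; lia.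
  by rewrite -(card_in_imset finj) -[X in _ <= X](card_ord (j - i).+1) max_card.
have DI : X :&: Y \subset I.
  apply/subsetP => k kD; rewrite inE; apply/andP; split; [exact: imin|exact: jmax].
have S1s : [set k : 'I_n | [&& i < k, k <= j & adj i k]] \subset I :\: Y.
  apply/subsetP => k; rewrite !inE => /and3P[a b c].
  rewrite (ltnW a) b /= ?andbT; apply/negP => kY.
  by move: (noe _ _ iX kY); rewrite c.
have S2s : [set k : 'I_n | [&& i <= k, k < j & adj k j]] \subset I :\: X.
  apply/subsetP => k; rewrite !inE => /and3P[a b c].
  rewrite a (ltnW b) /= ?andbT; apply/negP => kX.
  by move: (noe _ _ kX jY); rewrite c.
have hA := HA i j ij; have hB := HB i j ij; rewrite /nbA in hA; rewrite /nbB in hB.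
have c1 := subset_leq_card S1s; have c2 := subset_leq_card S2s.
have e3 := cardsUI (I :\: Y) (I :\: X).
have eU : (I :\: Y) :|: (I :\: X) = I :\: (X :&: Y).
  apply/setP => k; rewrite !inE.
  by case: (k \in X); case: (k \in Y); case: (i <= k); case: (k <= j).
have eI : (I :\: Y) :&: (I :\: X) \subset ~: (X :|: Y).
  apply/subsetP => k; rewrite !inE.
  by case: (k \in X); case: (k \in Y); rewrite ?andbF.
have c3 := subset_leq_card eI.
have e4 := cardsID (X :&: Y) I.
rewrite (setIidPr DI) in e4.
rewrite eU in e3.
have f1 : j - i <= 2 * #|I :\: Y| + s.
  by apply: leq_trans hA _; rewrite leq_add2r leq_mul2l c1 orbT.
have f2 : j - i <= 2 * #|I :\: X| + s.
  by apply: leq_trans hB _; rewrite leq_add2r leq_mul2l c2 orbT.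
move: f1 f2 e3 c3 e4 hI ij.
move: (#|I :\: Y|) (#|I :\: X|) (#|I :\: (X :&: Y)|) (#|(I :\: Y) :&: (I :\: X)|) (#|X :&: Y|) (#|~: (X :|: Y)|) (#|I|) => a1 a2 a3 a4 a5 a6 a7.
move: (nat_of_ord i) (nat_of_ord j) => ii jj.
lia.
Qed.

Theorem claim3p2 (s n : nat) (adj : 'I_n -> 'I_n -> bool) :
  (forall i j : 'I_n, i < j -> j - i <= 2 * nbA adj i j + s) ->
  (forall i j : 'I_n, i < j -> j - i <= 2 * nbB adj i j + s) ->
  exists M : {set 'I_n * 'I_n}, is_matching adj M /\ n - s - 1 <= #|M|.
Proof.
move=> HA HB.
have H : hallc s.+1 adj.
  move=> X.
  have := key HA HB (X := X) (Y := ~: NB adj X).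
  have := cardsC (NB adj X); rewrite card_ord.
  have noe : forall x y, x \in X -> y \in ~: NB adj X -> ~~ adj x y.
    move=> x y xX; rewrite !inE => /negP yN; apply/negP => hxy; apply: yN.
    by apply/existsP; exists x; rewrite xX hxy.
  move=> e /(_ noe).
  move: (#|X|) (#|NB adj X|) (#|~: NB adj X|) e => a b c e; lia.
have [M [[M1 M2] c]] := hall_def H.
exists M; split; first by split.
move: c; rewrite card_ord; move: (#|M|) => m; lia.
Qed.
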